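(* For every integer $n \geq 1$, let $r(n)$ be the number of three-candidate ballot sequences of length $n$ whose numbers $m_A, m_B, m_C$ of $A$'s, $B$'s and $C$'s satisfy $m_A \equiv m_B \equiv m_C \pmod 2$, and let $M(n)$ be the total number of three-candidate ballot sequences of length $n$. Then $M(n) = r(n) + r(n+1)$.
   Context: A three-candidate ballot sequence of length $n$ is a word $b_1\cdots b_n$ with $b_i\in\{A,B,C\}$ such that in every prefix $b_1\cdots b_k$ ($1\le k\le n$) the number of $A$'s is at least the number of $B$'s, which is at least the number of $C$'s. *)

(* Defs.v *)
From HB Require Import structures.
From mathcomp Require Import all_boot.
Set Implicit Arguments. Unset Strict Implicit. Unset Printing Implicit Defensive.

Inductive cand := A | B | C.

Definition cand_enc (x : cand) : 'I_3 :=
  match x with A => inord 0 | B => inord 1 | C => inord 2 end.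
Definition cand_dec (i : 'I_3) : cand :=
  match val i with 0 => A | 1 => B | _ => C end.
Lemma cand_encK : cancel cand_enc cand_dec.
Proof. by case; rewrite /cand_dec /= inordK. Qed.
HB.instance Definition _ := Finite.copy cand (can_type cand_encK).

Definition occ (x : cand) (s : seq cand) : nat := count_mem x s.

Definition ballot (s : seq cand) : bool :=
  [forall k : 'I_(size s).+1,
     (0 < k) ==> ((occ B (take k s) <= occ A (take k s)) &&
                  (occ C (take k s) <= occ B (take k s)))].

Definition M (n : nat) : nat := #|[set w : n.-tuple cand | ballot w]|.

Definition r (n : nat) : nat :=
  #|[set w : n.-tuple cand | ballot w &&
      [&& odd (occ A w) == odd (occ B w) & odd (occ B w) == odd (occ C w)]]|.

(* Main.v *)
Require Import Defs.
From mathcomp Require Import all_boot.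


Definition good (s : seq cand) : bool :=
  (occ B s <= occ A s) && (occ C s <= occ B s).

Lemma ballotE s : ballot s = all (fun k => good (take k s)) (iota 1 (size s)).
Proof.
apply/forallP/allP => [H k | H k].
- rewrite mem_iota => /andP [k1 k2].
  have kl : k < (size s).+1 by rewrite -add1n.
  by have := H (Ordinal kl); rewrite /= k1.
- apply/implyP => k0; apply: H; rewrite mem_iota k0 add1n; exact: ltn_ord.
Qed.

Lemma occ_rcons x s y : occ x (rcons s y) = occ x s + (y == x).
Proof. by rewrite /occ -cats1 count_cat /= addn0. Qed.

Lemma ballot_rcons s y : ballot (rcons s y) = ballot s && good (rcons s y).
Proof.
rewrite !ballotE size_rcons -[(size s).+1]addn1 iotaD all_cat /= andbT add1n.
rewrite take_oversize ?size_rcons //; congr andb.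
apply: eq_in_all => k; rewrite mem_iota => /andP [_ k2].
by rewrite -cats1 takel_cat // -ltnS -add1n.
Qed.

Lemma ballot_good s : ballot s -> good s.
Proof.
case/lastP: s => [|s y]; first by [].
by rewrite ballot_rcons => /andP [].
Qed.

Definition par (s : seq cand) : bool :=
  (odd (occ A s) == odd (occ B s)) && (odd (occ B s) == odd (occ C s)).

Definition fixc (s : seq cand) : cand :=
  if odd (occ A s) == odd (occ B s) then C
  else if odd (occ A s) == odd (occ C s) then B else A.

Lemma lt_par a b : b <= a -> odd a != odd b -> b < a.
Proof. move=> ba nab; rewrite ltn_neqAle ba andbT; apply/eqP => eba; by rewrite eba eqxx in nab. Qed.

Lemma candE : ((A == B) = false) * ((A == C) = false) * ((B == A) = false)
  * ((B == C) = false) * ((C == A) = false) * ((C == B) = false)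
  * ((A == A) = true) * ((B == B) = true) * ((C == C) = true).
Proof. by do !split; apply/eqP. Qed.

Lemma key1 s : ballot s -> ~~ par s ->
  ballot (rcons s (fixc s)) && par (rcons s (fixc s)).
Proof.
move=> bs nps; rewrite ballot_rcons bs /=.
move: (ballot_good s bs) nps; rewrite /good /par /fixc !occ_rcons.
move: (occ A s) (occ B s) (occ C s) => a b c /andP [ba cb].
case oa: (odd a); case ob: (odd b); case oc: (odd c) => //= _;
  rewrite !candE !addn0 !addn1 /= ?oa ?ob ?oc /= ?andbT ?ba ?cb /=.
all: rewrite ?(leqW ba) ?(leqW cb) ?andbT //.
all: first [apply: (lt_par _ _ ba); by rewrite ?oa ?ob ?oc | apply: (lt_par _ _ cb); by rewrite ?oa ?ob ?oc].
Qed.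

Lemma key2 s y : ballot (rcons s y) -> par (rcons s y) ->
  ballot s && ~~ par s && (fixc s == y).
Proof.
rewrite ballot_rcons => /andP [-> gs]; rewrite /par /fixc !occ_rcons.
case: y gs; rewrite !candE ?addn0 ?addn1 /=;
case: (odd (occ A s)) (odd (occ B s)) (odd (occ C s)) => [] [] [] //= _ _; rewrite ?candE.
Qed.

Definition fT n (w : n.-tuple cand) : n.+1.-tuple cand := [tuple of rcons w (fixc w)].

Lemma fT_inj n : injective (@fT n).
Proof.
move=> w1 w2 /(congr1 val) /= /rcons_inj [] e _; exact: val_inj.
Qed.

Theorem mainTheorem5 (n : nat) : 1 <= n -> M n = r n + r n.+1.
Proof.
move=> _; rewrite /M -(cardsID [set w : n.-tuple cand | par w]); congr addn.
  by rewrite /r; apply: eq_card => w; rewrite !inE.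
rewrite -(card_imset _ (@fT_inj n)) /r; apply: eq_card => t.
rewrite [in RHS]inE; apply/imsetP/andP.
  case=> w; rewrite !inE => /andP [npw bw] ->.
  by move: (key1 w bw npw) => /andP [].
case=> bt pt.
have sz := size_tuple t.
case/lastP E: (tval t) => [|s y]; first by rewrite E in sz.
rewrite E size_rcons in sz; case: sz => sz.
have szb : size s == n by rewrite sz.
rewrite E in bt pt.
move: (key2 s y bt pt) => /andP [/andP [bs nps] /eqP fy].
exists (Tuple szb); first by rewrite !inE nps bs.
by apply: val_inj; rewrite /= E fy.
Qed.
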